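(* For all $P,Q\in\Gamma_n$, $$D_{f_8}(P\|Q)\le \tfrac13 D_{f_1}(P\|Q)\le \tfrac14 D_{f_3}(P\|Q)\le \tfrac13 D_{f_2}(P\|Q)\le D_{f_6}(P\|Q).$$ Equivalently, $$\tfrac14\Delta-\tfrac13 M_{SH}\le \tfrac13\big(h-\tfrac12 M_{SG}\big)\le \tfrac14\big(h-\tfrac13 M_{SH}\big)\le\tfrac13\big(h-\tfrac14\Delta\big)\le \tfrac12 M_{SG}-\tfrac13 M_{SH},$$ all measures evaluated at $(P\|Q)$.
   Context: $\Gamma_n=\{P=(p_1,\dots,p_n): p_i>0,\ \sum_i p_i=1\}$, $n\ge2$. For $f:(0,\infty)\to\mathbb{R}$, $D_f(P\|Q)=\sum_{i=1}^n q_i f(p_i/q_i)$. For $x>0$ let $A=\frac{x+1}{2}$, $G=\sqrt x$, $H=\frac{2x}{x+1}$, $S=\sqrt{\frac{x^2+1}{2}}$ (means of $x$ and $1$), and define $f_1(x)=A-\frac{G+S}{2}$, $f_2(x)=\frac{A+H}{2}-G$, $f_3(x)=\frac13\big[3A+H-S-3G\big]$, $f_6(x)=\frac16\big[S+2H-3G\big]$, $f_8(x)=\frac16\big[3A-2S-H\big]$. The measures: $M_{SG}=\sum_i\big(\sqrt{(p_i^2+q_i^2)/2}-\sqrt{p_iq_i}\big)$, $M_{SH}=\sum_i\big(\sqrt{(p_i^2+q_i^2)/2}-\frac{2p_iq_i}{p_i+q_i}\big)$, $h=\frac12\sum_i(\sqrt{p_i}-\sqrt{q_i})^2$, $\Delta=\sum_i\frac{(p_i-q_i)^2}{p_i+q_i}$.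 *)

(* Defs.v *)
From Stdlib Require Import Reals Lra.
Open Scope R_scope.

Fixpoint rsum (n : nat) (f : nat -> R) : R :=
  match n with
  | O => 0
  | S m => rsum m f + f m
  end.

Definition Gamma (n : nat) (P : nat -> R) : Prop :=
  (forall i, (i < n)%nat -> 0 < P i) /\ rsum n P = 1.

Definition Df (f : R -> R) (n : nat) (P Q : nat -> R) : R :=
  rsum n (fun i => Q i * f (P i / Q i)).

(* means of x and 1 *)
Definition Am (x : R) : R := (x + 1) / 2.
Definition Gm (x : R) : R := sqrt x.
Definition Hm (x : R) : R := 2 * x / (x + 1).
Definition Sm (x : R) : R := sqrt ((x ^ 2 + 1) / 2).

Definition f1 (x : R) : R := Am x - (Gm x + Sm x) / 2.
Definition f2 (x : R) : R := (Am x + Hm x) / 2 - Gm x.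
Definition f3 (x : R) : R := / 3 * (3 * Am x + Hm x - Sm x - 3 * Gm x).
Definition f6 (x : R) : R := / 6 * (Sm x + 2 * Hm x - 3 * Gm x).
Definition f8 (x : R) : R := / 6 * (3 * Am x - 2 * Sm x - Hm x).

(* Main.v *)
Require Import Defs.
From Stdlib Require Import Reals Lra Psatz.
Open Scope R_scope.

Lemma key_ts t s : 0 < t -> 0 <= s -> s^2 = (t^4+1)/2 ->
  (t^2+1)/2 + t <= s + 2 * t^2/(t^2+1).
Proof.
  intros Ht Hs Hss.
  assert (K : 4*t*s <= (t^2+1)^2).
  { assert (H2 : (4*t*s)^2 <= ((t^2+1)^2)^2).
    { replace ((4*t*s)^2) with (16*t^2*s^2) by ring. rewrite Hss.
      assert (0 <= (t^2-1)^4) by (replace ((t^2-1)^4) with (((t^2-1)^2)^2) by ring; apply pow2_ge_0).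
      nra. }
    assert (0 <= 4*t*s) by nra.
    assert (0 <= (t^2+1)^2) by nra.
    nra. }
  assert (Ht2 : 0 < t^2+1) by nra.
  assert (HA : 0 < s + (t^2+1)/2) by nra.
  set (D := s - (t^2+1)/2).
  assert (HD : D * (s + (t^2+1)/2) = (t^2-1)^2/4) by (unfold D; replace ((s - (t^2+1)/2) * (s + (t^2+1)/2)) with (s^2 - ((t^2+1)/2)^2) by ring; rewrite Hss; field).
  assert (HM : t*(t-1)^2 * (s + (t^2+1)/2) <= D*(s+(t^2+1)/2)*(t^2+1)).
  { rewrite HD. assert (0 <= (t-1)^2) by apply pow2_ge_0.
    assert (0 <= (t-1)^2 * ((t^2+1)^2 - 4*t*s)) by (apply Rmult_le_pos; lra).
    assert (Eq : (t^2-1)^2/4*(t^2+1) - t*(t-1)^2 * (s + (t^2+1)/2) = (t-1)^2 * ((t^2+1)^2 - 4*t*s) / 4) by field.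
    lra. }
  assert (HM2 : t*(t-1)^2 <= D*(t^2+1)).
  { apply (Rmult_le_reg_r (s + (t^2+1)/2)); [lra|]. nra. }
  assert (E : s + 2*t^2/(t^2+1) - ((t^2+1)/2 + t) = (D*(t^2+1) - t*(t-1)^2)/(t^2+1)).
  { unfold D. field. lra. }
  assert (0 <= (D*(t^2+1) - t*(t-1)^2)/(t^2+1)).
  { unfold Rdiv; apply Rmult_le_pos; [lra| left; apply Rinv_0_lt_compat; lra]. }
  lra.
Qed.

Lemma key x : 0 < x -> Am x + Gm x <= Sm x + Hm x.
Proof.
  intros Hx. unfold Am, Gm, Sm, Hm.
  set (t := sqrt x).
  assert (Ht : 0 < t) by (apply sqrt_lt_R0; lra).
  assert (Htx : t^2 = x) by (unfold t; replace (sqrt x ^2) with (sqrt x * sqrt x) by ring; apply sqrt_sqrt; lra).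
  assert (Hs : 0 <= sqrt ((x^2+1)/2)) by apply sqrt_pos.
  assert (Hss : (sqrt ((x^2+1)/2))^2 = (t^4+1)/2).
  { replace (sqrt ((x^2+1)/2) ^2) with (sqrt ((x^2+1)/2) * sqrt ((x^2+1)/2)) by ring. rewrite sqrt_sqrt by nra. rewrite <- Htx. clearbody t. rewrite <- pow_mult. reflexivity. }
  pose proof (key_ts t _ Ht Hs Hss) as Hk.
  rewrite Htx in Hk. lra.
Qed.


Lemma rsum_le n f g : (forall i, (i < n)%nat -> f i <= g i) -> rsum n f <= rsum n g.
Proof.
  induction n; simpl; intros H; [lra|].
  assert (rsum n f <= rsum n g) by (apply IHn; intros; apply H; lia).
  specialize (H n ltac:(lia)). lra.
Qed.

Lemma rsum_scal n c f : c * rsum n f = rsum n (fun i => c * f i).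
Proof. induction n; simpl; [ring|]. rewrite <- IHn. ring. Qed.

Lemma step (n : nat) (P Q : nat -> R) (a b : R) (g h : R -> R) :
  Gamma n P -> Gamma n Q -> 0 < a -> 0 < b ->
  (forall x, 0 < x -> a * g x <= b * h x) ->
  a * Df g n P Q <= b * Df h n P Q.
Proof.
  intros [HP _] [HQ _] Ha Hb H. unfold Df. rewrite !rsum_scal.
  apply rsum_le. intros i Hi.
  assert (0 < P i / Q i) by (apply Rdiv_lt_0_compat; auto).
  specialize (H _ H0). specialize (HQ i Hi).
  nra.
Qed.

Theorem theorem7p1 (n : nat) (P Q : nat -> R) :
  (2 <= n)%nat -> Gamma n P -> Gamma n Q ->
  Df f8 n P Q <= / 3 * Df f1 n P Q /\
  / 3 * Df f1 n P Q <= / 4 * Df f3 n P Q /\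
  / 4 * Df f3 n P Q <= / 3 * Df f2 n P Q /\
  / 3 * Df f2 n P Q <= Df f6 n P Q.
Proof.
  intros _ HP HQ.
  repeat split.
  - rewrite <- (Rmult_1_l (Df f8 n P Q)).
    apply step; try assumption; try lra.
    intros x Hx. pose proof (key x Hx). unfold f8, f1. lra.
  - apply step; try assumption; try lra.
    intros x Hx. pose proof (key x Hx). unfold f3, f1. lra.
  - apply step; try assumption; try lra.
    intros x Hx. pose proof (key x Hx). unfold f3, f2. lra.
  - rewrite <- (Rmult_1_l (Df f6 n P Q)).
    apply step; try assumption; try lra.
    intros x Hx. pose proof (key x Hx). unfold f6, f2. lra.
Qed.
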